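(* Let $\rho$ be a density matrix on $\mathbb{C}^d$ and $X$ a $d\times d$ Hermitian matrix. Then $I^s(\rho,X)$ is a monotonically decreasing function of $s\in[-\infty,0]$ and is bounded by the variance: $I^{0}(\rho,X)\le I^{s}(\rho,X)\le I^{t}(\rho,X)\le I^{-\infty}(\rho,X)\le V(\rho,X)$ for all $-\infty\le t\le s\le 0$, where $V(\rho,X)=\mathrm{Tr}[\rho X^\dagger X]-|\mathrm{Tr}[\rho X^\dagger]|^2$. Moreover, if $\rho$ is a pure state, then $I^s(\rho,X)=V(\rho,X)$ for every $s\in[-\infty,0]$.
   Context: Write $\rho=\sum_{i=1}^{d}\lambda_i|\psi_i\rangle\langle\psi_i|$ with $\{|\psi_i\rangle\}$ an orthonormal basis of eigenvectors of $\rho$ and $\lambda_1\ge\cdots\ge\lambda_d\ge 0$. For $-\infty<s<0$ and $a_1,a_2>0$ define $m_s(a_1,a_2)=\left(\frac{a_1^s+a_2^s}{2}\right)^{1/s}$; set $m_0(a_1,a_2)=\sqrt{a_1a_2}$, $m_{-\infty}(a_1,a_2)=\min\{a_1,a_2\}$, and $m_s(a,0)=m_s(0,a)=m_s(0,0)=0$ for all $s\in[-\infty,0]$. Define $\zeta_\rho^s(X,Y)=\mathrm{Tr}[\rho X^\dagger Y]-\sum_{i,j=1}^d m_s(\lambda_i,\lambda_j)\langle\psi_i|X^\dagger|\psi_j\rangle\langle\psi_j|Y|\psi_i\rangle$ and $I^s(\rho,X)=\zeta_\rho^s(X,X)$. *)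

(* Defs.v *)
From HB Require Import structures.
From mathcomp Require Import all_boot all_order all_algebra.
From mathcomp Require Import complex.
From mathcomp Require Import boolp reals constructive_ereal ereal exp.
Set Implicit Arguments. Unset Strict Implicit. Unset Printing Implicit Defensive.
Import Order.TTheory GRing.Theory Num.Theory.
Local Open Scope ring_scope.
Local Open Scope complex_scope.

Definition adj (R : realType) (m n : nat) (A : 'M[R[i]]_(m, n)) : 'M[R[i]]_(n, m) :=
  (map_mx Num.conj A)^T.

Definition hermitian_mx (R : realType) (d : nat) (A : 'M[R[i]]_d) : Prop := adj A = A.

Definition psd (R : realType) (d : nat) (A : 'M[R[i]]_d) : Prop :=
  hermitian_mx A /\ forall v : 'cV[R[i]]_d, 0 <= (adj v *m A *m v) 0 0.

Definition density_matrix (R : realType) (d : nat) (rho : 'M[R[i]]_d) : Prop :=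
  psd rho /\ \tr rho = 1.

Definition unitary_mx (R : realType) (d : nat) (U : 'M[R[i]]_d) : Prop :=
  adj U *m U = 1%:M.

(* The power mean m_s(a1,a2) for s in [-oo,0] (s an extended real):
   s = -oo : min; s = 0 : geometric mean; -oo < s < 0 : ((a1^s+a2^s)/2)^(1/s);
   and m_s(a,0) = m_s(0,a) = 0. (Values for s > 0 or s = +oo are never used.) *)
Definition mean_s (R : realType) (s : \bar R) (a1 a2 : R) : R :=
  if (a1 == 0) || (a2 == 0) then 0 else
  match s with
  | -oo%E => Num.min a1 a2
  | (r%:E)%E => if r == 0 then Num.sqrt (a1 * a2)
                else ((a1 `^ r + a2 `^ r) / 2) `^ (r^-1)
  | +oo%E => 0
  end.

(* zeta_rho^s(X,Y), where rho = sum_i lam i |psi_i><psi_i| and psi_i is the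
   i-th column of U; <psi_i|A|psi_j> = (U^dagger A U) i j. *)
Definition zeta (R : realType) (d : nat) (s : \bar R) (rho U : 'M[R[i]]_d)
    (lam : 'I_d -> R) (X Y : 'M[R[i]]_d) : R[i] :=
  \tr (rho *m adj X *m Y)
  - \sum_(i < d) \sum_(j < d)
      (mean_s s (lam i) (lam j))%:C * (adj U *m adj X *m U) i j
                                   * (adj U *m Y *m U) j i.

Definition Is (R : realType) (d : nat) (s : \bar R) (rho U : 'M[R[i]]_d)
    (lam : 'I_d -> R) (X : 'M[R[i]]_d) : R[i] := zeta s rho U lam X X.

Definition variance (R : realType) (d : nat) (rho X : 'M[R[i]]_d) : R[i] :=
  \tr (rho *m adj X *m X) - (`|\tr (rho *m adj X)| ^+ 2).

(* Main.v *)
Require Import Defs.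
From HB Require Import structures.
From mathcomp Require Import all_boot all_order all_algebra.
From mathcomp Require Import complex.
From mathcomp Require Import boolp reals constructive_ereal ereal exp.
From mathcomp Require Import classical_sets convex hoelder.
From mathcomp Require Import ring lra.
Import Order.TTheory GRing.Theory Num.Theory.
Local Open Scope ring_scope.
Local Open Scope complex_scope.
Section RealPart.
Variable R : realType.
Implicit Types a b k X Y e u v r q x : R.

Lemma mid_convex k X Y : 1 <= k -> 0 <= X -> 0 <= Y ->
  ((X + Y) / 2) `^ k <= (X `^ k + Y `^ k) / 2.
Proof.
move=> k1 X0 Y0.
have h0 : (0:R) <= 2^-1 by rewrite invr_ge0.
have h1 : (2^-1:R) <= 1 by rewrite invf_le1 ?ler1n.
have H := convex_powR k1 (Itv01 h0 h1) (x:=X) (y:=Y).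
have hX : X \in (classical_sets.mkset (fun x : R => x \in `[0, +oo[)).
  by apply: classical_sets.mem_set; rewrite /= in_itv /= X0.
have hY : Y \in (classical_sets.mkset (fun x : R => x \in `[0, +oo[)).
  by apply: classical_sets.mem_set; rewrite /= in_itv /= Y0.
have H2 := H hX hY; rewrite convRE /= /unstable.onem in H2.
set c := (X in X `^ k <= _) in H2.
have ec : c = 2^-1 * X + (1 - 2^-1) * Y by reflexivity.
have e2 : (1 - 2^-1 : R) = 2^-1 by rewrite {1}(splitr 1) div1r addrK.
rewrite ec e2 -!mulrDr in H2.
by rewrite ![_ / 2]mulrC.
Qed.

Lemma powR_anti e u v : e <= 0 -> 0 < u -> u <= v -> v `^ e <= u `^ e.
Proof.
move=> e0 u0 uv; have v0 : 0 < v by apply: lt_le_trans uv.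
have h : u `^ (-e) <= v `^ (-e).
  by apply: (@ge0_ler_powR R (-e)); rewrite ?oppr_ge0 ?nnegrE ?(ltW u0) ?(ltW v0).
have -> : e = - (-e) by rewrite opprK.
by rewrite (powRN v (-e)) (powRN u (-e)) lef_pV2 ?posrE ?powR_gt0.
Qed.

Definition PM r a b := ((a `^ r + b `^ r) / 2) `^ r^-1.

Lemma powR_inv_id r x : r != 0 -> 0 <= x -> (x `^ r) `^ r^-1 = x.
Proof. by move=> r0 x0; rewrite -powRrM mulfV // powRr1. Qed.

Lemma min_le_PM r a b : r < 0 -> 0 < a -> 0 < b -> Num.min a b <= PM r a b.
Proof.
move=> r0 a0 b0; set m := Num.min a b.
have m0 : 0 < m by rewrite /m lt_min a0 b0.
have ha : a `^ r <= m `^ r by apply: powR_anti; rewrite ?(ltW r0) // /m ?ge_min ?lexx.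
have hb : b `^ r <= m `^ r by apply: powR_anti; rewrite ?(ltW r0) // /m ?ge_min ?lexx ?orbT.
have hs : (a `^ r + b `^ r) / 2 <= m `^ r by lra.
have p0 : 0 < (a `^ r + b `^ r) / 2 by rewrite divr_gt0 ?addr_gt0 ?powR_gt0.
rewrite -{1}(@powR_inv_id r m) ?(ltW m0) ?ltr0_neq0 //.
by apply: powR_anti; rewrite // invr_le0 ltW.
Qed.

Lemma sqrt_powR x r : 0 <= x -> (Num.sqrt x) `^ r = Num.sqrt (x `^ r).
Proof.
move=> x0; rewrite -(powR12_sqrt x0) -(powR12_sqrt (powR_ge0 x r)).
by rewrite -!powRrM mulrC.
Qed.

Lemma PM_le_sqrt r a b : r < 0 -> 0 < a -> 0 < b -> PM r a b <= Num.sqrt (a * b).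
Proof.
move=> r0 a0 b0; set g := Num.sqrt (a * b).
have ab0 : 0 < a * b by rewrite mulr_gt0.
have g0 : 0 < g by rewrite /g sqrtr_gt0.
have eg : g `^ r = Num.sqrt (a `^ r) * Num.sqrt (b `^ r).
  rewrite /g sqrtrM ?(ltW a0) // powRM ?sqrtr_ge0 //.
  by rewrite !sqrt_powR ?ltW.
have hA := sqr_sqrtr (powR_ge0 a r).
have hB := sqr_sqrtr (powR_ge0 b r).
have hs : g `^ r <= (a `^ r + b `^ r) / 2.
  rewrite eg; move: hA hB.
  set u := Num.sqrt _; set v := Num.sqrt _ => hA hB.
  rewrite -hA -hB.
  have : 0 <= (u - v) ^+ 2 by rewrite sqr_ge0.
  rewrite !expr2; lra.
have p0 : 0 < g `^ r by rewrite powR_gt0.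
rewrite -[X in _ <= X](@powR_inv_id r g) ?(ltW g0) ?ltr0_neq0 //.
by apply: powR_anti; rewrite // invr_le0 ltW.
Qed.

Lemma PM_mono q r a b : q <= r -> r < 0 -> 0 < a -> 0 < b -> PM q a b <= PM r a b.
Proof.
move=> qr r0 a0 b0.
have q0 : q < 0 by apply: le_lt_trans qr r0.
set k := q / r.
have k1 : 1 <= k by rewrite /k ler_ndivlMr // mul1r.
have eq : q = r * k by rewrite /k mulrC divfK // ltr0_neq0.
have rn : r != 0 by rewrite ltr0_neq0.
have kn : k != 0 by rewrite /k mulf_neq0 ?invr_eq0 ?ltr0_neq0.
have er : r^-1 = k * q^-1 by rewrite eq invfM mulrCA mulfV ?mulr1.
set X := a `^ r; set Y := b `^ r.
have ha : a `^ q = X `^ k by rewrite /X -powRrM -eq.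
have hb : b `^ q = Y `^ k by rewrite /Y -powRrM -eq.
rewrite /PM ha hb er powRrM.
have X0 : 0 < X by rewrite powR_gt0.
have Y0 : 0 < Y by rewrite powR_gt0.
apply: powR_anti; first by rewrite invr_le0 ltW.
  by rewrite powR_gt0 // divr_gt0 ?addr_gt0.
exact: mid_convex (ltW X0) (ltW Y0).
Qed.

Lemma min_le_sqrt a b : 0 < a -> 0 < b -> Num.min a b <= Num.sqrt (a * b).
Proof.
move=> a0 b0; have h : (-1 : R) < 0 by rewrite ltrN10.
exact: le_trans (@min_le_PM (-1) a b h a0 b0) (@PM_le_sqrt (-1) a b h a0 b0).
Qed.

Lemma mean_mono s t a b : 0 <= a -> 0 <= b -> (t <= s)%E -> (s <= 0%:E)%E ->
  mean_s t a b <= mean_s s a b.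
Proof.
move=> a0 b0 ts s0; rewrite /mean_s; case: ifP => [_|/norP[an bn]]; first exact: lexx.
have a1 : 0 < a by rewrite lt_def an a0.
have b1 : 0 < b by rewrite lt_def bn b0.
case: s ts s0 => [r| |] ts s0; last first.
- case: t ts => [q| |] ts; [by rewrite leeNy_eq in ts|by rewrite leeNy_eq in ts|exact: lexx].
- by rewrite leye_eq in s0.
case: t ts => [q| |] ts; last first.
- have [r0|rn] := eqVneq r 0; first exact: min_le_sqrt.
  rewrite lee_fin in s0.
  by apply: min_le_PM => //; rewrite lt_def eq_sym rn.
- by rewrite leye_eq in ts.
- rewrite lee_fin in ts s0.
  have [r0|rn] := eqVneq r 0.
    have [q0|qn] := eqVneq q 0; first exact: lexx.
    apply: PM_le_sqrt => //; rewrite lt_def eq_sym qn /=; by rewrite r0 in ts.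
  have r1 : r < 0 by rewrite lt_def eq_sym rn.
  have qn : q != 0 by rewrite ltr0_neq0 // (le_lt_trans ts r1).
  by rewrite (negbTE qn); apply: PM_mono.
Qed.
End RealPart.

Section MatPart.
Variable R : realType.
Variable d : nat.
Implicit Types A B M U X : 'M[R[i]]_d.

Lemma adjE (m n : nat) (A : 'M[R[i]]_(m, n)) i j : adj A i j = Num.conj (A j i).
Proof. by rewrite /adj !mxE. Qed.

Lemma adjM A B : adj (A *m B) = adj B *m adj A.
Proof. by rewrite /adj map_mxM trmx_mul. Qed.

Lemma adjK A : adj (adj A) = A.
Proof. by apply/matrixP => i j; rewrite !adjE conjCK. Qed.

Lemma tr_diag_mul (l : 'I_d -> R[i]) M :
  \tr (diag_mx (\row_i l i) *m M) = \sum_i l i * M i i.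
Proof. by rewrite /mxtrace; apply: eq_bigr => i _; rewrite mul_diag_mx !mxE. Qed.


Lemma Is_expr s rho U X (lam : 'I_d -> R) :
  hermitian_mx X -> unitary_mx U -> rho = U *m diag_mx (\row_i (lam i)%:C) *m adj U ->
  Is s rho U lam X = \sum_i \sum_j ((lam i)%:C - (mean_s s (lam i) (lam j))%:C) *
     ((adj U *m X *m U) i j * (adj U *m X *m U) j i).
Proof.
move=> hX hU hrho.
have UU : U *m adj U = 1%:M by apply: mulmx1C.
have E1 : \tr (rho *m adj X *m X) =
   \tr (diag_mx (\row_i (lam i)%:C) *m ((adj U *m X *m U) *m (adj U *m X *m U))).
  rewrite hrho hX -!mulmxA mxtrace_mulC -!mulmxA.
  by rewrite [U *m (adj U *m _)]mulmxA UU mul1mx.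
rewrite /Is /zeta E1 tr_diag_mul hX -sumrB; apply: eq_bigr => i _.
rewrite mxE mulr_sumr -sumrB; apply: eq_bigr => j _.
by rewrite mulrBl !mulrA.
Qed.

Lemma tr_rhoX rho U X (lam : 'I_d -> R) :
  hermitian_mx X -> unitary_mx U -> rho = U *m diag_mx (\row_i (lam i)%:C) *m adj U ->
  \tr (rho *m adj X) = \sum_i (lam i)%:C * (adj U *m X *m U) i i.
Proof.
move=> hX hU hrho.
have UU : U *m adj U = 1%:M by apply: mulmx1C.
rewrite hrho hX -!mulmxA mxtrace_mulC -!mulmxA tr_diag_mul.
by apply: eq_bigr => i _; rewrite !mxE.
Qed.

Lemma tr_rho rho U (lam : 'I_d -> R) :
  unitary_mx U -> rho = U *m diag_mx (\row_i (lam i)%:C) *m adj U ->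
  \tr rho = \sum_i (lam i)%:C.
Proof.
move=> hU hrho.
rewrite hrho -mulmxA mxtrace_mulC -mulmxA hU mulmx1 mxtrace_diag.
by apply: eq_bigr => i _; rewrite mxE.
Qed.
End MatPart.

Lemma cs_lemma (C : numClosedFieldType) n (w a : 'I_n -> C) :
  (forall i, 0 <= w i) -> (forall i, Num.conj (w i) = w i) -> \sum_i w i = 1 ->
  `|\sum_i w i * a i| ^+ 2 <= \sum_i w i * (a i * Num.conj (a i)).
Proof.
move=> w0 wc w1; rewrite normCK; set T := \sum_i w i * a i.
have hT : Num.conj T = \sum_i w i * Num.conj (a i).
  by rewrite /T rmorph_sum; apply: eq_bigr => i _; rewrite rmorphM /= wc.
have h0 : 0 <= \sum_i w i * ((a i - T) * Num.conj (a i - T)).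
  by apply: sumr_ge0 => i _; rewrite mulr_ge0 ?mul_conjC_ge0.
have e : \sum_i w i * ((a i - T) * Num.conj (a i - T)) =
   \sum_i w i * (a i * Num.conj (a i)) - T * Num.conj T.
  have e1 : forall i, w i * ((a i - T) * Num.conj (a i - T)) =
     w i * (a i * Num.conj (a i)) - (w i * a i * Num.conj T + T * (w i * Num.conj (a i)))
     + w i * (T * Num.conj T).
    by move=> i; rewrite rmorphB /=; ring.
  rewrite (eq_bigr _ (fun i _ => e1 i)) big_split /= sumrB big_split /=.
  rewrite -mulr_suml -mulr_sumr -mulr_suml w1 -hT -/T; ring.
by rewrite -subr_ge0 -e.
Qed.

Lemma mean_s11 (R : realType) (s : \bar R) : (s <= 0%:E)%E -> mean_s s 1 1 = 1.
Proof.
rewrite /mean_s oner_eq0 /=; case: s => [r| |] //= _.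
- case: ifP => _; first by rewrite mulr1 sqrtr1.
  have h2 : ((1:R) + 1) / 2 = 1 by lra.
  by rewrite powR1 /= h2 powR1.
- by rewrite minxx.
Qed.

Theorem theorem2 (R : realType) (d : nat) (rho X U : 'M[R[i]]_d) (lam : 'I_d -> R) :
  density_matrix rho ->
  hermitian_mx X ->
  unitary_mx U ->
  rho = U *m diag_mx (\row_i (lam i)%:C) *m adj U ->
  (forall i j : 'I_d, (i <= j)%N -> lam j <= lam i) ->
  (forall i, 0 <= lam i) ->
  (forall s t : \bar R, (t <= s)%E -> (s <= 0%:E)%E ->
     Is 0%:E rho U lam X <= Is s rho U lam X /\
     Is s rho U lam X <= Is t rho U lam X /\
     Is t rho U lam X <= Is -oo%E rho U lam X /\
     Is -oo%E rho U lam X <= variance rho X) /\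
  (rho *m rho = rho ->
     forall s : \bar R, (s <= 0%:E)%E -> Is s rho U lam X = variance rho X).
Proof.
move=> [_ htr] hX hU hrho _ lam0.
set A := adj U *m X *m U.
have UU : U *m adj U = 1%:M by apply: mulmx1C.
have hA : forall i j, A j i = Num.conj (A i j).
  have e : adj A = A by rewrite /A !adjM adjK hX mulmxA.
  by move=> i j; rewrite -adjE e.
have c0 : forall i j, 0 <= A i j * A j i by move=> i j; rewrite (hA i j) mul_conjC_ge0.
have cr : forall k : R, Num.conj (k%:C) = k%:C := @conjc_real R.
have sum1C : \sum_i (lam i)%:C = 1 by rewrite -(@tr_rho R d rho U lam hU hrho).
have sum1 : \sum_i lam i = 1.
  by apply: (@complexI R); rewrite rmorph_sum /= sum1C.
set trXX := \tr (rho *m adj X *m X).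
have Is_def : forall s, Is s rho U lam X =
    trXX - \sum_i \sum_j (mean_s s (lam i) (lam j))%:C * (A i j * A j i).
  move=> s; rewrite /Is /zeta /trXX; congr (_ - _); rewrite hX.
  by apply: eq_bigr => i _; apply: eq_bigr => j _; rewrite mulrA.
have mono : forall s t : \bar R, (t <= s)%E -> (s <= 0%:E)%E ->
    Is s rho U lam X <= Is t rho U lam X.
  move=> s t ts s0; rewrite !Is_def lerD2l lerN2.
  apply: ler_sum => i _; apply: ler_sum => j _.
  by apply: ler_wpM2r => //; rewrite lecR mean_mono.
have hT : \tr (rho *m adj X) = \sum_i (lam i)%:C * A i i := @tr_rhoX R d rho U X lam hX hU hrho.
split.
  move=> s t ts s0.
  have t0 : (t <= 0%:E)%E := le_trans ts s0.
  split; first exact: mono.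
  split; first exact: mono.
  split; first by apply: mono => //; rewrite leNye.
  rewrite /variance Is_def -/trXX lerD2l lerN2 hT.
  apply: le_trans (@cs_lemma _ d (fun i => (lam i)%:C) (fun i => A i i) _ _ _) _.
  - by move=> i; rewrite ler0c.
  - by move=> i; rewrite cr.
  - exact: sum1C.
  apply: le_trans (_ : _ <= \sum_i (mean_s -oo%E (lam i) (lam i))%:C * (A i i * A i i)) _.
    apply: ler_sum => i _; rewrite -hA; apply: ler_wpM2r => //.
    rewrite lecR /mean_s; case: ifP => [/orP[/eqP->|/eqP->]|_]; by rewrite ?minxx.
  apply: ler_sum => i _.
  rewrite (bigD1 i) //= lerDl; apply: sumr_ge0 => j _.
  by rewrite mulr_ge0 // ler0c; rewrite /mean_s; case: ifP => // _; rewrite le_min !lam0.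
move=> hpure s s0.
set D := diag_mx (\row_i (lam i)%:C).
have hD : adj U *m rho *m U = D.
  by rewrite hrho -!mulmxA hU mulmx1 mulmxA hU mul1mx.
have DD : D *m D = D.
  rewrite -hD -!mulmxA (mulmxA U) UU mul1mx (mulmxA rho rho U) hpure.
  by rewrite !mulmxA.
have ll : forall i, lam i * lam i = lam i.
  move=> i; apply: (@complexI R); rewrite rmorphM /=.
  move/matrixP: DD => /(_ i i); rewrite {1}/D mul_diag_mx !mxE eqxx mulr1n.
  by [].
have l01 : forall i, lam i = 0 \/ lam i = 1.
  move=> i; have : lam i * (lam i - 1) = 0 by rewrite mulrBr mulr1 ll subrr.
  by move/eqP; rewrite mulf_eq0 subr_eq0 => /orP[/eqP->|/eqP->]; [left|right].
have off : forall i j, i != j -> lam i * lam j = 0.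
  move=> i j ij.
  case: (l01 i) => [->|hi]; first by rewrite mul0r.
  case: (l01 j) => [->|hj]; first by rewrite mulr0.
  have : lam i + lam j <= \sum_k lam k.
    rewrite (bigD1 i) //= (bigD1 j) //= 1?eq_sym // addrA lerDl.
    by apply: sumr_ge0 => k _.
  rewrite sum1 hi hj; lra.
have mean : forall i j, mean_s s (lam i) (lam j) = lam i * lam j.
  move=> i j.
  case: (l01 i) => [->|hi]; first by rewrite mul0r /mean_s eqxx.
  case: (l01 j) => [->|hj]; first by rewrite mulr0 /mean_s eqxx orbT.
  by rewrite hi hj mulr1 mean_s11.
rewrite Is_def /variance -/trXX hT; congr (_ - _); rewrite normCK.
rewrite rmorph_sum mulr_suml; apply: eq_bigr => i _.
rewrite mulr_sumr; apply: eq_bigr => j _.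
rewrite mean rmorphM /= rmorphM /= cr.
have [<-|ij] := eqVneq i j.
  by rewrite -(hA i i); ring.
have z : (lam i)%:C * (lam j)%:C = 0 by rewrite -rmorphM off.
transitivity (((lam i)%:C * (lam j)%:C) * (A i i * Num.conj (A j j))); last by ring.
by rewrite z !mul0r.
Qed.
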